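(* Let $\mathcal{H}$ be an infinite dimensional complex Hilbert space and let $\phi:\mathcal{B}(\mathcal{H})\to\mathcal{B}(\mathcal{H})$ be a bijective map preserving the Douglas solution in both directions. If $P\in\mathcal{B}(\mathcal{H})$ is an orthogonal projection ($P=P^2=P^*$), then $\phi(P)$ is an orthogonal projection.
   Context: $\mathcal{B}(\mathcal{H})$ denotes the algebra of all bounded linear operators on $\mathcal{H}$. For $A,B\in\mathcal{B}(\mathcal{H})$ with $\operatorname{ran}A\subseteq\operatorname{ran}B$, the Douglas solution of $A=BX$ is the unique $D\in\mathcal{B}(\mathcal{H})$ with $BD=A$ and $\operatorname{ran}D\subseteq(\ker B)^\perp$. A map $\phi:\mathcal{B}(\mathcal{H})\to\mathcal{B}(\mathcal{H})$ preserves the Douglas solution in both directions if for all $A,B,X\in\mathcal{B}(\mathcal{H})$: $X$ is the Douglas solution of $A=BX$ if and only if $\phi(X)$ is the Douglas solution of $\phi(A)=\phi(B)Y$. *)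

(* Defs.v *)
From HB Require Import structures.
From mathcomp Require Import all_boot all_order all_algebra.
From mathcomp Require Import reals complex.
Set Implicit Arguments. Unset Strict Implicit. Unset Printing Implicit Defensive.
Import Order.TTheory GRing.Theory Num.Theory.
Local Open Scope ring_scope.

Section Hilbert.
Variables (R : realType) (V : lmodType R[i]) (ip : V -> V -> R[i]).

Definition is_inner_product : Prop :=
  [/\ (forall (a : R[i]) (x y z : V), ip (a *: x + y) z = a * ip x z + ip y z),
      (forall x y : V, ip x y = Num.conj (ip y x)),
      (forall x : V, 0 <= ip x x) &
      (forall x : V, ip x x = 0 -> x = 0)].

Definition hnorm (x : V) : R := Num.sqrt (complex.Re (ip x x)).

Definition is_complete : Prop :=
  forall u : nat -> V,
    (forall e : R, 0 < e -> exists N : nat, forall m n : nat,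
        (N <= m)%N -> (N <= n)%N -> hnorm (u m - u n) < e) ->
    exists l : V, forall e : R, 0 < e -> exists N : nat, forall n : nat,
        (N <= n)%N -> hnorm (u n - l) < e.

Definition is_hilbert_space : Prop := is_inner_product /\ is_complete.

Definition infinite_dimensional : Prop :=
  forall n : nat, exists v : 'I_n -> V,
    forall c : 'I_n -> R[i], \sum_(k < n) c k *: v k = 0 -> forall k, c k = 0.

Record BH := MkBH {
  bop :> V -> V;
  bop_linear : forall (a : R[i]) (x y : V), bop (a *: x + y) = a *: bop x + bop y;
  bop_bounded : exists M : R, forall x : V, hnorm (bop x) <= M * hnorm x
}.

(* D is the Douglas solution of A = B X:  B D = A and ran D ⊆ (ker B)^⊥ *)
Definition douglas_solution (A B D : BH) : Prop :=
  (forall x : V, B (D x) = A x) /\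
  (forall x k : V, B k = 0 -> ip (D x) k = 0).

Definition preserves_douglas_both (phi : BH -> BH) : Prop :=
  forall A B X : BH,
    douglas_solution A B X <-> douglas_solution (phi A) (phi B) (phi X).

(* orthogonal projection: P = P^2 = P^*  (P^* = P unfolded via the defining
   identity of the adjoint <P x, y> = <x, P^* y>) *)
Definition orth_projection (P : BH) : Prop :=
  (forall x : V, P (P x) = P x) /\ (forall x y : V, ip (P x) y = ip x (P y)).

End Hilbert.

(* Main.v *)
Require Import Defs.
From mathcomp Require Import all_boot all_order all_algebra.
From mathcomp Require Import reals complex.
Import Order.TTheory GRing.Theory Num.Theory.
Local Open Scope ring_scope.

Lemma ip_addr (R : realType) (V : lmodType R[i]) (ip : V -> V -> R[i])
  (h : is_inner_product ip) (z x y : V) : ip z (x + y) = ip z x + ip z y.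
Proof.
case: h => hl hs _ _.
rewrite hs -{1}[x]scale1r hl mul1r rmorphD /= -!hs //.
Qed.

Lemma bop_sub (R : realType) (V : lmodType R[i]) (ip : V -> V -> R[i])
  (Q : BH ip) (x y : V) : Q (y - x) = Q y - Q x.
Proof.
rewrite addrC -scaleN1r bop_linear scaleN1r addrC //.
Qed.

Lemma orth_iff (R : realType) (V : lmodType R[i]) (ip : V -> V -> R[i])
  (h : is_inner_product ip) (Q : BH ip) :
  douglas_solution Q Q Q -> orth_projection Q.
Proof.
move=> [hQ hk]; split => // x y.
have hs : forall u v, ip u v = Num.conj (ip v u) by case: h.
have hk1 : forall u, Q (u - Q u) = 0 by move=> u; rewrite bop_sub hQ subrr.
have e1 : ip (Q x) y = ip (Q x) (Q y).
  by rewrite -{1}(subrK (Q y) y) addrC ip_addr // (hk _ _ (hk1 y)) addr0.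
have e2 : ip x (Q y) = ip (Q x) (Q y).
  by rewrite -{1}(subrK (Q x) x) addrC hs [ip (Q y) _]ip_addr // (hk _ _ (hk1 x)) addr0 -hs.
by rewrite e1 e2.
Qed.

Lemma orth_douglas (R : realType) (V : lmodType R[i]) (ip : V -> V -> R[i])
  (h : is_inner_product ip) (Q : BH ip) :
  orth_projection Q -> douglas_solution Q Q Q.
Proof.
move=> [hQ hsa]; split => // x k hk.
rewrite hsa hk.
case: h => hl hs _ _.
have h0 : forall z, ip 0 z = 0.
  move=> z; have := hl 1 0 0 z; rewrite scaler0 addr0 mul1r.
  by move/(congr1 (fun t => t - ip 0 z)); rewrite subrr addrK.
by rewrite hs h0 rmorph0.
Qed.

Theorem claim3 (R : realType) (V : lmodType R[i]) (ip : V -> V -> R[i])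
  (hH : is_hilbert_space ip) (hinf : infinite_dimensional V)
  (phi : BH ip -> BH ip) (hbij : bijective phi)
  (hphi : preserves_douglas_both phi)
  (P : BH ip) (hP : orth_projection P) :
  orth_projection (phi P).
Proof.
case: hH => hi _.
have hd := proj1 (hphi P P P) (@orth_douglas R V ip hi P hP).
exact: (@orth_iff R V ip hi (phi P) hd).
Qed.
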